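(* The set $\{\operatorname{is}(X): X\in\mathfrak U\}$ is dense in the space of isometry types of compact ultrametric spaces endowed with the Gromov–Hausdorff metric $d_{GH}$.
   Context: $\operatorname{Sp}(X)=\{d(x,y):x\neq y\}$; $\mathfrak U$ is the class of finite ultrametric spaces $X$ with $|\operatorname{Sp}(X)|=|X|-1$. $\operatorname{is}(X)$ denotes the isometry type (class of all metric spaces isometric to $X$). For bounded metric spaces $X,Y$ and $\varepsilon>0$, $d_{GH}(\operatorname{is}(X),\operatorname{is}(Y))<\varepsilon$ iff there is a metric space $(Z,d_Z)$ with subspaces $X',Y'$ isometric to $X,Y$ such that $X'\subseteq\bigcup_{y\in Y'}O_\varepsilon(y)$ and $Y'\subseteq\bigcup_{x\in X'}O_\varepsilon(x)$, where $O_\varepsilon(t)=\{z\in Z:d_Z(t,z)<\varepsilon\}$; $d_{GH}$ is a metric on isometry types of compact metric spaces. *)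

(* Defs.v *)
From HB Require Import structures.
From mathcomp Require Import all_boot all_order all_algebra.
From mathcomp Require Import reals.
Set Implicit Arguments. Unset Strict Implicit. Unset Printing Implicit Defensive.
Import Order.TTheory GRing.Theory Num.Theory.
Local Open Scope ring_scope.

Section Defs.
Variable R : realType.

Definition is_metric (T : Type) (d : T -> T -> R) : Prop :=
  [/\ (forall x y, 0 <= d x y),
      (forall x y, d x y = 0 <-> x = y),
      (forall x y, d x y = d y x) &
      (forall x y z, d x z <= d x y + d y z)].

Definition is_ultrametric (T : Type) (d : T -> T -> R) : Prop :=
  is_metric d /\ (forall x y z, d x z <= Num.max (d x y) (d y z)).

Definition metric_open (T : Type) (d : T -> T -> R) (U : T -> Prop) : Prop :=
  forall x, U x -> exists2 e, 0 < e & forall y, d x y < e -> U y.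

Definition metric_compact (T : Type) (d : T -> T -> R) : Prop :=
  forall (I : Type) (U : I -> T -> Prop),
    (forall i, metric_open d (U i)) -> (forall x, exists i, U i x) ->
    exists (n : nat) (F : 'I_n -> I), forall x, exists j, U (F j) x.

Definition isometric_emb (A B : Type) (dA : A -> A -> R) (dB : B -> B -> R)
  (f : A -> B) : Prop := forall a a', dB (f a) (f a') = dA a a'.

(* d_GH(is X, is Y) < eps, via the characterization from the paper *)
Definition GH_lt (X Y : Type) (dX : X -> X -> R) (dY : Y -> Y -> R) (eps : R)
  : Prop :=
  exists (Z : Type) (dZ : Z -> Z -> R), is_metric dZ /\
  exists (f : X -> Z) (g : Y -> Z),
    [/\ isometric_emb dX dZ f, isometric_emb dY dZ g,
        (forall x, exists y, dZ (f x) (g y) < eps) &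
        (forall y, exists x, dZ (g y) (f x) < eps)].

Definition spectrum (X : finType) (d : X -> X -> R) : seq R :=
  undup [seq d p.1 p.2 | p <- enum [pred p : X * X | p.1 != p.2]].

Definition in_frakU (X : finType) (d : X -> X -> R) : Prop :=
  [/\ 0 < #|X|, is_ultrametric d & size (spectrum d) = #|X|.-1]%N.

End Defs.

(* Main.v *)
Require Import Defs.
From HB Require Import structures.
From mathcomp Require Import all_boot all_order all_algebra.
From mathcomp Require Import reals.
From mathcomp Require Import zify ring lra.
From Stdlib Require Import Classical.
Import Order.TTheory GRing.Theory Num.Theory.
Local Open Scope ring_scope.

Lemma R1 (R : realType) (r u v : R) :
  r <= u -> u <= Num.max r v -> v <= Num.max r u -> u = Num.max r v.
Proof.
rewrite !maxEle; case: (leP r v) => hv; case: (leP r u) => hu //; lra.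
Qed.

Lemma R2 (R : realType) (m D a b : R) :
  m < D -> a <= Num.max m b -> b <= Num.max m a -> Num.max D a = Num.max D b.
Proof.
rewrite !maxEle; case: (leP m b) => hb; case: (leP m a) => ha;
case: (leP D a) => hDa; case: (leP D b) => hDb => //; lra.
Qed.

Fixpoint cm (R : realType) (c : nat -> R) (a l : nat) : R :=
  match l with 0 => 0 | l.+1 => Num.max (c a) (cm R c a.+1 l) end.
Arguments cm {R}.

Lemma cm_ge0 (R : realType) (c : nat -> R) a l : 0 <= cm c a l.
Proof. elim: l a => [|l IH] a /=; first by []. by rewrite le_max IH orbT. Qed.

Lemma cm_ge (R : realType) (c : nat -> R) a l k :
  (a <= k < a + l)%N -> c k <= cm c a l.
Proof.
elim: l a => [|l IH] a /=; first by lia.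
move=> h; rewrite le_max; case: (eqVneq k a) => [->|hk]; first by rewrite lexx.
by rewrite IH ?orbT //; lia.
Qed.

Lemma cm_att (R : realType) (c : nat -> R) a l :
  (forall k, 0 <= c k) -> (0 < l)%N -> exists k, (a <= k < a + l)%N /\ cm c a l = c k.
Proof.
move=> c0; elim: l a => [|l IH] a //= _.
case: l IH => [|l] IH.
  exists a; split; first by lia. by rewrite /= maxEle leNgt lt_def c0 andbT; case: eqP.
have [k [hk ek]] := IH a.+1 isT.
rewrite maxEle; case: ifP => _.
  by exists k; split => //; lia.
by exists a; split => //; lia.
Qed.

Lemma cm_le (R : realType) (c c' : nat -> R) a l t : 0 <= t ->
  (forall k, (a <= k < a + l)%N -> c' k <= c k + t) -> cm c' a l <= cm c a l + t.
Proof.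
move=> t0; elim: l a => [|l IH] a /=; first by rewrite add0r.
move=> h; rewrite ge_max; apply/andP; split.
  apply: le_trans (h a _) _; first by lia. by rewrite lerD2r le_max lexx.
apply: le_trans (IH a.+1 _) _; first by move=> k hk; apply: h; lia.
by rewrite lerD2r le_max lexx orbT.
Qed.

Lemma cm_mono (R : realType) (c c' : nat -> R) a l :
  (forall k, (a <= k < a + l)%N -> c' k <= c k) -> cm c' a l <= cm c a l.
Proof.
move=> h; have := @cm_le R c c' a l 0 (lexx _).
by rewrite addr0; apply => k hk; rewrite addr0 h.
Qed.

Lemma cm_shift (R : realType) (c : nat -> R) a l :
  cm c a.+1 l = cm (fun k => c k.+1) a l.
Proof. by elim: l a => [|l IH] a //=; rewrite IH. Qed.

Fixpoint good (R : realType) (Y : Type) (d : Y -> Y -> R) (p : seq Y) : Prop :=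
  match p with
  | x :: t => match t with
              | [::] => True
              | y :: _ => good R Y d t /\ (forall z, List.In z t -> d x z = Num.max (d x y) (d y z))
              end
  | [::] => True
  end.
Arguments good {R Y}.

Definition near (R : realType) (Y : Type) (d : Y -> Y -> R) q y (l : seq Y) :=
  forall z, List.In z l -> d q y <= d q z.
Arguments near {R Y}.


Lemma ult_facts {R : realType} {Y : Type} {d : Y -> Y -> R} : is_ultrametric d ->
  [/\ forall x, d x x = 0, forall x y, 0 <= d x y, forall x y, d x y = d y x
   & forall x y z, d x z <= Num.max (d x y) (d y z)].
Proof.
case=> [[h0 h1 h2 h3] hu]; split => //; by move=> x; apply/h1.
Qed.

Lemma G1 {R : realType} {Y : Type} {d : Y -> Y -> R} : is_ultrametric d ->
  forall q x z, d q x <= d q z -> d q z = Num.max (d q x) (d x z).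
Proof.
move/ult_facts=> [d0 dp ds du] q x z h.
apply: R1 => //; rewrite -(ds x q); exact: du.
Qed.

Lemma good_cons_near {R : realType} {Y : Type} {d : Y -> Y -> R} : is_ultrametric d ->
  forall q y t, good d (y :: t) -> near d q y (y :: t) -> good d (q :: y :: t).
Proof.
move=> hU q y t g n; split => // z hz; apply: G1 => //; exact: n.
Qed.

Lemma ins_lemma {R : realType} {Y : Type} {d : Y -> Y -> R} : is_ultrametric d ->
  forall q t y, good d (y :: t) -> exists p',
  [/\ good d p', List.In q p', (forall z, List.In z (y :: t) -> List.In z p'),
      (forall z, List.In z p' -> z = q \/ List.In z (y :: t)) &
      ((near d q y (y :: t) -> p' = q :: y :: t) /\
       (~ near d q y (y :: t) -> exists t', p' = y :: t'))].
Proof.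
move=> hU; have [d0 dp ds du] := ult_facts hU.
move=> q; elim=> [|y1 t1 IH] y g.
- exists [:: q; y]; split.
  + apply: (good_cons_near hU) => // z [<-|//]; exact: lexx.
  + by left.
  + by move=> z hz; right.
  + by move=> z [<-|hz]; [left|right].
  + split => // hn; exfalso; apply: hn => z [<-|//]; exact: lexx.
case: (classic (near d q y [:: y, y1 & t1])) => hn.
  exists [:: q, y, y1 & t1]; split.
  + exact: (good_cons_near hU).
  + by left.
  + by move=> z hz; right.
  + by move=> z [<-|hz]; [left|right].
  + by split.
have [w hw hlt] : exists2 w, List.In w [:: y1 & t1] & d q w < d q y.
  apply: NNPP => hc; apply: hn => z hz.
  case: hz => [<-|hz]; first exact: lexx.
  rewrite leNgt; apply/negP => hz'; apply: hc; by exists z.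
case: g => g1 H.
set D := d q y.
have hxw : d y w <= D.
  apply: le_trans (du y q w) _; rewrite ge_max ds lexx /=; exact: ltW.
have hxy : d y y1 <= D.
  apply: le_trans hxw; rewrite (H w hw) le_max lexx //.
have [p'' [gp'' qp'' inc'' el'' [n1 n2]]] := IH y1 g1.
exists (y :: p''); split.
- case: (classic (near d q y1 (y1 :: t1))) => hn1.
  + rewrite (n1 hn1); split; first by rewrite -(n1 hn1).
    have hqy1 : d q y1 < D by apply: le_lt_trans (hn1 w hw) hlt.
    have eD : d y y1 = D.
      apply/le_anti; rewrite hxy /=.
      have h := du q y1 y; move: h; rewrite -/D (ds y1 y) maxEle.
      case: ifP => _ h //.
      by have := lt_le_trans hqy1 h; rewrite ltxx.
    move=> z [<-|hz].
    * by rewrite d0; apply/esym/max_idPl; exact: dp.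
    * rewrite (H z hz) eD (ds y q) -/D; apply: R2 hqy1 _ _.
      - by rewrite (ds q y1); apply: du.
      - exact: du.
  + have [t' et'] := n2 hn1; rewrite et'; split; first by rewrite -et'.
    rewrite -et' => z hz; case: (el'' z hz) => [->|hz'].
    * rewrite (ds y q) -/D; apply/le_anti/andP; split.
      - by rewrite /D (ds q y); exact: du.
      - rewrite ge_max hxy /=; apply: le_trans (du y1 y q) _.
        by rewrite ge_max (ds y1 y) hxy /= (ds y q) -/D lexx.
    * exact: H.
- by right.
- by move=> z [<-|hz]; [left|right; apply: inc''].
- move=> z [<-|hz]; first by right; left.
  by case: (el'' z hz) => [->|h]; [left|right; right].
- split => // _; by exists p''.
Qed.

Lemma build_good {R : realType} {Y : Type} {d : Y -> Y -> R} : is_ultrametric d ->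
  forall (l : seq Y) (y0 : Y), exists p, [/\ good d p, List.In y0 p &
    forall z, List.In z l -> List.In z p].
Proof.
move=> hU; elim=> [|z l IH] y0.
  by exists [:: y0]; split => //; left.
have [[|y t] [gp yp incp]] := IH y0; first by [].
have [p' [g' q' inc' _ _]] := ins_lemma hU z t y gp.
exists p'; split => //; first exact: inc'.
move=> z' [<-|hz] //; exact/inc'/incp.
Qed.

Lemma In_nth {Y : Type} (y0 : Y) (p : seq Y) z :
  List.In z p -> exists2 i, (i < size p)%N & nth y0 p i = z.
Proof.
elim: p => [|x p IH] //= [->|hz]; first by exists 0%N.
by have [i hi <-] := IH hz; exists i.+1.
Qed.

Lemma nth_In {Y : Type} (y0 : Y) (p : seq Y) i :
  (i < size p)%N -> List.In (nth y0 p i) p.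
Proof.
elim: p i => [|x p IH] [|i] //= h; first by left.
right; exact: IH.
Qed.

Lemma mem_In {T : eqType} (x : T) (s : seq T) : x \in s -> List.In x s.
Proof.
elim: s => [|y s IH] //; rewrite in_cons => /orP [/eqP ->|h]; [by left|right; exact: IH].
Qed.

Lemma good_cm {R : realType} {Y : Type} {d : Y -> Y -> R} : is_ultrametric d ->
  forall (y0 : Y) (p : seq Y) i l, (i + l < size p)%N -> good d p ->
  d (nth y0 p i) (nth y0 p (i + l)) =
    cm (fun k => d (nth y0 p k) (nth y0 p k.+1)) i l.
Proof.
move=> hU; have [d0 dp ds du] := ult_facts hU.
move=> y0; elim=> [|x t IH] i l //= hs g.
have gt : good d t by case: t IH hs g => // y t' IH hs [].
case: i hs => [|i] hs; last first.
  rewrite addSn /= cm_shift; apply: IH => //.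
case: l hs => [|l] hs; first by rewrite /= d0.
case: t IH hs g gt => [|y t'] IH hs //= [g1 H] _.
rewrite cm_shift.
have e := IH 0%N l; rewrite add0n in e.
have -> : cm (fun k => d (nth y0 [:: x, y & t'] k.+1) (nth y0 (y :: t') k.+1)) 0 l
  = cm (fun k => d (nth y0 (y :: t') k) (nth y0 (y :: t') k.+1)) 0 l by [].
rewrite -e; [|simpl in hs |- *; lia|exact: g1].
apply: H; apply: (nth_In y0 (y :: t') l); simpl in hs |- *; lia.
Qed.

Lemma avoid_m {R : realType} (L : seq R) {a b : R} : a < b ->
  exists m, [/\ a < m, m <= b & forall v, v \in L -> ~~ ((a < v) && (v < m))].
Proof.
move=> ab; elim: L => [|x L [m [am mb H]]]; first by exists b; split.
case: (boolP ((a < x) && (x < m))) => /andP.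
  move=> [ax xm]; exists x; split => //; first exact: ltW (lt_le_trans xm mb).
  move=> v; rewrite in_cons => /orP [/eqP ->|hv]; first by rewrite ltxx andbF.
  apply/negP => /andP [av vx]; have := H v hv; rewrite av (lt_trans vx xm) //.
move=> hx; exists m; split => // v; rewrite in_cons => /orP [/eqP ->|hv].
  by apply/negP => /andP h; apply: hx.
exact: H.
Qed.

Lemma avoid {R : realType} (L : seq R) {a b : R} : a < b ->
  exists v, [/\ a < v, v < b & v \notin L].
Proof.
move=> ab; have [m [am mb H]] := avoid_m L ab.
have h1 : a < (a + m) / 2 by lra.
have h2 : (a + m) / 2 < m by lra.
exists ((a + m) / 2); split => //.
- exact: lt_le_trans h2 mb.
- by apply/negP => hv; have := H _ hv; rewrite h1 h2.
Qed.

Lemma perturb {R : realType} (g : nat -> R) (t : R) : 0 < t -> forall N : nat,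
  exists cs : seq R, [/\ size cs = N, uniq cs &
    forall k, (k < N)%N -> g k < nth 0 cs k < g k + t].
Proof.
move=> t0; elim=> [|N [cs [sz u H]]]; first by exists [::].
have gt : g N < g N + t by lra.
have [v [v1 v2 v3]] := avoid cs gt.
exists (rcons cs v); split.
- by rewrite size_rcons sz.
- by rewrite rcons_uniq v3.
- move=> k hk; rewrite nth_rcons sz.
  case: (ltnP k N) => h; first exact: H.
  have -> : k = N by lia.
  by rewrite eqxx v1 v2.
Qed.

Lemma max_le_add {R : realType} (a b : R) : 0 <= a -> 0 <= b -> Num.max a b <= a + b.
Proof. by rewrite maxEle; case: ifP => _ ha hb; lra. Qed.

Lemma cm_dist_ult {R : realType} (c : nat -> R) (i j k : nat) :
  (forall k, 0 <= c k) ->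
  cm c (minn i k) (maxn i k - minn i k) <=
  Num.max (cm c (minn i j) (maxn i j - minn i j)) (cm c (minn j k) (maxn j k - minn j k)).
Proof.
move=> c0.
case: (posnP (maxn i k - minn i k)) => hl.
  by rewrite hl /= le_max cm_ge0.
have [m [hm ->]] := @cm_att R c (minn i k) _ c0 hl.
have : ((minn i j <= m < minn i j + (maxn i j - minn i j)) ||
        (minn j k <= m < minn j k + (maxn j k - minn j k)))%N by lia.
case/orP => h; rewrite le_max (@cm_ge R c _ _ _ h) ?orbT //.
Qed.

Theorem theorem28 (R : realType) (Y : Type) (dY : Y -> Y -> R) :
  (exists y : Y, True) -> is_ultrametric dY -> metric_compact dY ->
  forall eps : R, 0 < eps ->
  exists (X : finType) (dX : X -> X -> R), in_frakU dX /\ GH_lt dX dY eps.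
Proof.
move=> [y0 _] hU hC eps eps0.
have [d0 dp ds du] := ult_facts hU.
have [[_ d1 _ tri] _] := hU.
pose del := eps / 3.
have del0 : 0 < del by rewrite /del; lra.
have [n0 [F hF]] : exists (n : nat) (F : 'I_n -> Y), forall x, exists j, dY (F j) x < del.
  apply: (hC Y (fun y z => dY y z < del)).
  - move=> y x hx; exists (del - dY y x); first lra.
    move=> z hz; have := tri y x z; lra.
  - by move=> x; exists x; rewrite /= d0.
pose l := [seq F j | j <- enum 'I_n0].
have [p [gp y0p incp]] := build_good hU l y0.
have n0p : (0 < size p)%N by case: p gp y0p incp.
pose n := size p.
pose g k := dY (nth y0 p k) (nth y0 p k.+1).
have [cs [szc ucs hcs]] := perturb g del del0 n.-1.
pose c k := nth 0 cs k.
have c0 : forall k, 0 <= c k.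
  move=> k; case: (ltnP k n.-1) => hk.
    have := hcs k hk; rewrite /c; move: (dp (nth y0 p k) (nth y0 p k.+1)); rewrite /g; lra.
  by rewrite /c nth_default // szc.
have cpos : forall k, (k < n.-1)%N -> 0 < c k.
  move=> k hk; have := hcs k hk; move: (dp (nth y0 p k) (nth y0 p k.+1)); rewrite /c /g; lra.
pose dX (i j : 'I_n) := cm c (minn i j) (maxn i j - minn i j).
pose pY (i : 'I_n) := nth y0 p i.
have key1 : forall i j : 'I_n, dY (pY i) (pY j) = cm g (minn i j) (maxn i j - minn i j).
  move=> i j; case: (leqP i j) => h.
    rewrite /pY -{1}(subnKC h); apply: good_cm => //.
    rewrite subnKC //; exact: ltn_ord.
  have h' := ltnW h.
  rewrite ds /pY -{1}(subnKC h'); apply: good_cm => //.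
  rewrite subnKC //; exact: ltn_ord.
have key2 : forall i j : 'I_n, dY (pY i) (pY j) <= dX i j <= dY (pY i) (pY j) + del.
  move=> i j; rewrite key1; apply/andP; split.
    apply: cm_mono => k hk.
    have hk' : (k < n.-1)%N by have := ltn_ord i; have := ltn_ord j; lia.
    by have /andP[h1 h2] := hcs k hk'; apply: ltW.
  apply: cm_le; first exact: ltW.
  move=> k hk.
  have hk' : (k < n.-1)%N by have := ltn_ord i; have := ltn_ord j; lia.
  by have /andP[h1 h2] := hcs k hk'; apply: ltW.
have dXpos : forall i j : 'I_n, i != j -> 0 < dX i j.
  move=> i j hij; apply: lt_le_trans (cpos (minn i j) _) _.
    have := ltn_ord i; have := ltn_ord j; have : (i : nat) <> j by move=> e; move: hij; rewrite (ord_inj e) eqxx.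
    lia.
  apply: cm_ge; have : (i : nat) <> j by move=> e; move: hij; rewrite (ord_inj e) eqxx.
  lia.
have dXii : forall i : 'I_n, dX i i = 0 by move=> i; rewrite /dX minnn maxnn subnn.
have dXs : forall i j : 'I_n, dX i j = dX j i by move=> i j; rewrite /dX minnC maxnC.
have dXu : forall i j k : 'I_n, dX i k <= Num.max (dX i j) (dX j k).
  by move=> i j k; apply: cm_dist_ult.
have dX0 : forall i j : 'I_n, 0 <= dX i j by move=> i j; apply: cm_ge0.
have hUX : is_ultrametric dX.
  split => //; split => //.
  - move=> i j; split; last by move=> ->.
    move=> h; apply/eqP; apply: contraT => hij; have := dXpos i j hij; by rewrite h ltxx.
  - move=> a b e; apply: le_trans (dXu a b e) _; exact: max_le_add.
have hsp : size (spectrum dX) = n.-1.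
  rewrite /spectrum.
  set L := [seq _ | _ <- _].
  have hL : undup L =i [seq c k | k <- iota 0 n.-1].
    move=> v; rewrite mem_undup; apply/mapP/mapP.
    - move=> [[a b]]; rewrite mem_enum inE /= => hab ->; rewrite /dX /=.
      have hl : (0 < maxn a b - minn a b)%N.
        have : (a:nat) <> b by move=> e; move: hab; rewrite (ord_inj e) eqxx.
        lia.
      have [m [hm ->]] := @cm_att R c (minn a b) _ c0 hl.
      exists m => //; rewrite mem_iota; have := ltn_ord a; have := ltn_ord b; lia.
    - move=> [k]; rewrite mem_iota add0n => hk ->.
      have hk1 : (k < n)%N by lia.
      have hk2 : (k.+1 < n)%N by lia.
      exists (Ordinal hk1, Ordinal hk2).
        rewrite mem_enum inE /=; apply/eqP => /(congr1 val) /= e; lia.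
      rewrite /dX /= (minn_idPl (leqnSn k)) (maxn_idPr (leqnSn k)) subSnn /=.
      by apply/esym/max_idPl.
  rewrite (perm_size (uniq_perm (undup_uniq L) _ hL)); first by apply: eq_trans (size_map _ _) _; exact: size_iota.
  rewrite map_inj_in_uniq ?iota_uniq //.
  move=> a b; rewrite !mem_iota !add0n => ha hb /eqP; rewrite /c nth_uniq ?szc // => /eqP.
  by [].
exists 'I_n, dX; split.
  by split => //; rewrite card_ord.
pose Z := ('I_n + Y)%type.
pose dZ (u v : Z) : R := match u, v with
  | inl a, inl b => dX a b
  | inr y, inr y' => dY y y'
  | inl a, inr y => dY (pY a) y + del
  | inr y, inl a => dY (pY a) y + del end.
have k2 : forall a b : 'I_n, dX a b <= dY (pY a) (pY b) + del /\ dY (pY a) (pY b) <= dX a b.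
  by move=> a b; have /andP[h1 h2] := key2 a b.
exists Z, dZ; split.
  split.
  - by case=> [a|y] [b|y'] /=; [exact: dX0|apply: addr_ge0; [exact: dp|exact: ltW]|apply: addr_ge0; [exact: dp|exact: ltW]|exact: dp].
  - case=> [a|y] [b|y'] /=.
    + split => [h|[->]]; last exact: dXii.
      suff -> : a = b by [].
      apply/eqP; apply: contraT => hab; have := dXpos a b hab; by rewrite h ltxx.
    + split => h; [exfalso; move: h; have := dp (pY a) y'; lra|discriminate h].
    + split => h; [exfalso; move: h; have := dp (pY b) y; lra|discriminate h].
    + split => [h|[->]]; last exact: d0.
      by have -> : y = y' by apply/d1.
  - by case=> [a|y] [b|y'] //=; rewrite ?ds ?dXs.
  - case=> [a|y] [b|y'] [e|y''] /=.
    + by have [[_ _ _ t] _] := hUX; exact: t.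
    + have [h1 h2] := k2 a b; have := tri (pY a) (pY b) y''; lra.
    + have [h1 h2] := k2 a e; have := tri (pY a) y' (pY e); rewrite (ds y' (pY e)); lra.
    + have := tri (pY a) y' y''; lra.
    + have [h1 h2] := k2 b e; have := tri (pY e) (pY b) y; rewrite (ds (pY e) (pY b)); lra.
    + have := tri y (pY b) y''; rewrite (ds y (pY b)); lra.
    + have := tri (pY e) y' y; rewrite (ds y' y); lra.
    + exact: tri.
exists inl, inr; split => //.
- by move=> a; exists (pY a) => /=; rewrite d0 add0r /del; lra.
- move=> y; have [j hj] := hF y.
  have : List.In (F j) p by apply: incp; apply: List.in_map; apply: mem_In; rewrite mem_enum.
  move/(In_nth y0) => [i hi ei].
  exists (Ordinal hi) => /=; rewrite /pY /= ei /del; move: hj; rewrite -/del /del; lra.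
Qed.
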